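(* In the setting described in the context, for every $j$ with $1\leqslant j\leqslant n-1$, the set of lines $\{\ell_J : J \text{ an ordered subset of } \{1,\ldots,|L|\},\ |J|=j\}$ is a set of lines in $\Sigma_{j+1}$ whose directions (their intersection points with the hyperplane $\pi_{j+1}$ of $\Sigma_{j+1}$, regarded as the hyperplane at infinity) are pairwise distinct and contained in an $|L|^{j}$ grid of $\pi_{j+1}$.
   Context: Let ${\mathbb K}$ be a field, $n\geqslant 2$, and consider $\mathrm{PG}_n({\mathbb K})$. For two non-intersecting subspaces $x,y$, $x\oplus y$ denotes their span. Fix points $x_0,\ldots,x_n$ in general position and put $\Sigma_i=x_0\oplus\cdots\oplus x_i$, $\pi_i=x_1\oplus\cdots\oplus x_i$ for $i=1,\ldots,n$. For $i=3,\ldots,n$ let $y_i$ be a point on the line $x_{i-1}\oplus x_i$ different from $x_{i-1}$ and $x_i$. Let $L$ be a finite set of lines of the plane $\Sigma_2$ meeting the line $\pi_2$ in pairwise distinct points, all different from $x_2$. Label them $\ell_{\{1\}},\ldots,\ell_{\{|L|\}}$. An ordered subset $J$ of $\{1,\ldots,|L|\}$ is a sequence of distinct elements; for $|J|\geqslant2$ write $J=(\ldots,b,a)$ ($a$ last, $b$ second-to-last) and let $J\setminus\{a\}$, $J\setminus\{b\}$ be obtained by deleting $a$, resp. $b$, keeping the order. For $2\leqslant|J|\leqslant n-1$ define recursively $\ell_J=(x_{|J|+1}\oplus \ell_{J\setminus\{a\}})\cap(y_{|J|+1}\oplus \ell_{J\setminus\{b\}})$. A $N^{k}$ grid in a $k$-dimensional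 projective space $\mathrm{PG}_k({\mathbb K})$ is a point set which, with respect to a suitable basis of the underlying vector space, has the form $\{\langle(a_1,\ldots,a_k,1)\rangle : a_i\in A_i\}$, where each $A_i\subseteq{\mathbb K}$ has size $N$; here $\pi_{j+1}$ is regarded as $\mathrm{PG}_j({\mathbb K})$. *)

(* Defs.v *)
From HB Require Import structures.
From mathcomp Require Import all_boot all_order all_algebra.
Set Implicit Arguments. Unset Strict Implicit. Unset Printing Implicit Defensive.
Import GRing.Theory.
Local Open Scope ring_scope.

(* PG_n(K) is modelled by the vector space K^(n+1) = 'rV[K]_(n.+1).
   Projective subspaces are row spaces of matrices (mxalgebra, scope %MS):
   a point is a subspace of rank 1, a line one of rank 2.  The span x (+) y
   is (x + y)%MS and the intersection is (x :&: y)%MS.  Point x_i is the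
   row space of the nonzero vector x i. *)

Definition Sigma (K : fieldType) (n : nat) (x : nat -> 'rV[K]_n.+1) (i : nat)
  : 'M[K]_n.+1 := (\sum_(k < i.+1) <<x k>>)%MS.

Definition Pi (K : fieldType) (n : nat) (x : nat -> 'rV[K]_n.+1) (i : nat)
  : 'M[K]_n.+1 := (\sum_(k < i.+1 | (0 < k)%N) <<x k>>)%MS.

(* An ordered subset J is
   a sequence; writing J = (..., b, a), rev J = a :: b :: r, so that
   J \ {a} = rev (b :: r) and J \ {b} = rev (a :: r).
   ell_J = (x_{|J|+1} (+) ell_{J\{a}}) :&: (y_{|J|+1} (+) ell_{J\{b}}). *)
Fixpoint ellJ_fuel (K : fieldType) (n m : nat) (x y : nat -> 'rV[K]_n.+1)
  (ell : 'I_m -> 'M[K]_n.+1) (f : nat) (J : seq 'I_m) : 'M[K]_n.+1 :=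
  match f with
  | 0 => 0
  | f'.+1 =>
    match rev J with
    | [:: a] => ell a
    | a :: b :: r =>
        ((x (size J).+1 + ellJ_fuel x y ell f' (rev (b :: r)))
         :&: (y (size J).+1 + ellJ_fuel x y ell f' (rev (a :: r))))%MS
    | [::] => 0
    end
  end.

Definition lineJ (K : fieldType) (n m : nat) (x y : nat -> 'rV[K]_n.+1)
  (ell : 'I_m -> 'M[K]_n.+1) (J : seq 'I_m) : 'M[K]_n.+1 :=
  ellJ_fuel x y ell (size J) J.

(* Main.v *)
Require Import Defs.
From HB Require Import structures.
From mathcomp Require Import all_boot all_order all_algebra.
From mathcomp Require Import zify.
Set Implicit Arguments. Unset Strict Implicit. Unset Printing Implicit Defensive.
Import GRing.Theory.
Local Open Scope ring_scope.

Section Coords.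
Variables (K : fieldType) (n : nat) (x : nat -> 'rV[K]_n.+1).
Hypothesis hX : row_free (\matrix_(i < n.+1) x i).

Let X := \matrix_(i < n.+1) x i.
Definition cf (i : nat) (v : 'rV[K]_n.+1) : K := (v *m invmx X) 0 (inord i).

Lemma Xunit : X \in unitmx. Proof. by rewrite -row_free_unit. Qed.

Lemma cfD i u v : cf i (u + v) = cf i u + cf i v.
Proof. by rewrite /cf mulmxDl mxE. Qed.
Lemma cfZ i a v : cf i (a *: v) = a * cf i v.
Proof. by rewrite /cf -scalemxAl mxE. Qed.
Lemma cfN i v : cf i (- v) = - cf i v.
Proof. by rewrite /cf mulNmx mxE. Qed.
Lemma cfB i u v : cf i (u - v) = cf i u - cf i v.
Proof. by rewrite cfD cfN. Qed.
Lemma cf0 i : cf i 0 = 0.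
Proof. by rewrite /cf mul0mx mxE. Qed.
Lemma cf_sum i (I : Type) (r : seq I) (P : pred I) (F : I -> 'rV[K]_n.+1) :
  cf i (\sum_(k <- r | P k) F k) = \sum_(k <- r | P k) cf i (F k).
Proof.
by rewrite /cf mulmx_suml summxE.
Qed.

Lemma cfx i l : (i <= n)%N -> (l <= n)%N -> cf i (x l) = (i == l)%:R.
Proof.
move=> hi hl.
have -> : x l = delta_mx 0 (inord l) *m X.
  rewrite -rowE /X rowK inordK //.
rewrite /cf mulmxK; last exact: Xunit.
rewrite mxE eqxx /=.
have -> : (inord i == inord l :> 'I_n.+1) = (i == l) => //.
apply/idP/idP => /eqP h; apply/eqP.
  by move: (congr1 (@nat_of_ord _) h); rewrite !inordK.
by rewrite h.
Qed.

Lemma recon v : v = \sum_(i < n.+1) cf i v *: x i.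
Proof.
rewrite {1}(_ : v = (v *m invmx X) *m X); last by rewrite mulmxKV ?Xunit.
rewrite mulmx_sum_row; apply: eq_bigr => i _.
by rewrite rowK /cf inord_val.
Qed.

Lemma xnz l : (l <= n)%N -> x l != 0.
Proof.
move=> hl; apply/eqP => h; have := cfx hl hl; rewrite h cf0 eqxx.
by move/eqP; rewrite eq_sym oner_eq0.
Qed.

Lemma span_sub N (P : pred 'I_N) (v : 'rV[K]_n.+1) :
  (forall i : 'I_N, P i -> (i <= n)%N) ->
  (v <= \sum_(i < N | P i) <<x i>>)%MS <->
  (forall l, (l <= n)%N -> (forall i : 'I_N, P i -> val i != l) -> cf l v = 0).
Proof.
move=> hP; split.
  case/sub_sumsmxP=> u -> l hl hne; rewrite cf_sum big1 // => i Pi.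
  have : (u i *m <<x i>> <= x i)%MS by rewrite (submx_trans (submxMl _ _)) ?genmxE.
  case/sub_rVP=> a ->; rewrite cfZ cfx ?hP //.
  by rewrite eq_sym (negbTE (hne i Pi)) mulr0.
move=> h; rewrite (recon v); apply: summx_sub => l _.
case: (pickP (fun i : 'I_N => P i && (val i == val l))) => [i /andP[Pi /eqP e]|none].
  apply: scalemx_sub; apply: (sumsmx_sup i) => //; by rewrite genmxE e.
rewrite h ?scale0r ?sub0mx //; first by rewrite -ltnS.
by move=> i Pi; apply/negP => e; have := none i; rewrite Pi e.
Qed.

Lemma SigmaP k v : (k <= n)%N ->
  (v <= Sigma x k)%MS <-> (forall l, (k < l <= n)%N -> cf l v = 0).
Proof.
move=> hk; rewrite /Sigma.
apply: iff_trans (span_sub (P := predT) v _) _.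
  by move=> i _; rewrite (leq_trans _ hk) // -ltnS.
split=> h l.
  case/andP=> kl ln; apply: h => // i _; apply/eqP => e.
  by have := ltn_ord i; rewrite e ltnS leqNgt kl.
move=> ln hne; apply: h; rewrite ln andbT ltnNge; apply/negP => lk.
by have := hne (@Ordinal k.+1 l lk) isT; rewrite eqxx.
Qed.

Lemma PiP k v : (k <= n)%N ->
  (v <= Pi x k)%MS <-> (cf 0 v = 0 /\ forall l, (k < l <= n)%N -> cf l v = 0).
Proof.
move=> hk; rewrite /Pi.
apply: iff_trans (span_sub (P := fun i : 'I_k.+1 => (0 < i)%N) v _) _.
  by move=> i _; rewrite (leq_trans _ hk) // -ltnS.
split=> h.
  split.
    by apply: h => // i; rewrite lt0n.
  move=> l /andP[kl ln]; apply: h => // i _; apply/eqP => e.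
  by have := ltn_ord i; rewrite e ltnS leqNgt kl.
case: h => h0 h l ln hne; case: l ln hne => [|l] ln hne; first exact: h0.
apply: h; rewrite ln andbT ltnNge; apply/negP => lk.
by have := hne (@Ordinal k.+1 l.+1 lk) isT; rewrite eqxx.
Qed.
End Coords.

Section Gen.
Variable K : fieldType.

Lemma rank_add_rV p N (A : 'M[K]_(p, N)) (v : 'rV_N) :
  ~~ (v <= A)%MS -> \rank (A + v)%MS = (\rank A).+1.
Proof.
move=> nvA.
have vnz : v != 0 by apply: contraNneq nvA => ->; rewrite sub0mx.
have := mxrank_sum_cap A v; rewrite rank_rV vnz.
have -> : \rank (A :&: v)%MS = 0%N.
  apply/eqP; rewrite mxrank_eq0 -submx0; apply: contraT => h.
  have r1 : \rank (A :&: v)%MS = 1%N.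
    apply/eqP; rewrite eqn_leq; apply/andP; split.
      by apply: leq_trans (mxrankS (capmxSr A v)) _; rewrite rank_rV vnz.
    by rewrite lt0n mxrank_eq0 -submx0.
  have : (v <= A :&: v)%MS.
    have := mxrank_leqif_sup (capmxSr A v); rewrite r1 rank_rV vnz.
    by case=> _ <-.
  by rewrite sub_capmx (negbTE nvA).
by rewrite addn0 addn1.
Qed.

Lemma rank_add_rV' p N (A : 'M[K]_(p, N)) (v : 'rV_N) :
  ~~ (v <= A)%MS -> \rank (v + A)%MS = (\rank A).+1.
Proof. by move=> h; rewrite addsmxC rank_add_rV. Qed.

Lemma rV_eq1 p N (v : 'rV[K]_N) (A : 'M_(p, N)) :
  v != 0 -> (v <= A)%MS -> \rank A = 1%N -> (v == A)%MS.
Proof.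
move=> vnz vA rA; have := mxrank_leqif_eq vA; rewrite rank_rV vnz rA.
by case=> _ <-.
Qed.

Lemma sub_adds_rV N (u v w : 'rV[K]_N) :
  (w <= u + v)%MS -> exists a b, w = a *: u + b *: v.
Proof.
case/sub_addsmxP=> [[u1 u2]] /= ->.
exists (u1 0 0), (u2 0 0).
by rewrite {1}(mx11_scalar u1) {1}(mx11_scalar u2) !mul_scalar_mx.
Qed.

Lemma sub_adds_rVM p N (u w : 'rV[K]_N) (A : 'M_(p, N)) :
  (w <= u + A)%MS -> exists a (B : 'rV_N), w = a *: u + B /\ (B <= A)%MS.
Proof.
case/sub_addsmxP=> [[u1 u2]] /= ->.
exists (u1 0 0), (u2 *m A); split; last exact: submxMl.
by rewrite {1}(mx11_scalar u1) !mul_scalar_mx.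
Qed.

Lemma eq_rank_sub p1 p2 p3 N (M : 'M[K]_(p1, N)) (Q : 'M_(p2, N)) (L : 'M_(p3, N)) :
  (M <= Q)%MS -> (\rank Q <= \rank M)%N -> (L <= Q)%MS -> (L <= M)%MS.
Proof.
move=> MQ r LQ; apply: submx_trans LQ _.
have := mxrank_leqif_sup MQ; case=> _ <-; apply/eqP; apply/eqP.
by rewrite eqn_leq r andbT mxrankS.
Qed.
End Gen.

Section SP.
Variables (K : fieldType) (n : nat) (x : nat -> 'rV[K]_n.+1).

Lemma x_sub_Sigma i k : (i <= k)%N -> (x i <= Sigma x k)%MS.
Proof.
move=> ik; rewrite /Sigma (sumsmx_sup (@Ordinal k.+1 i ik)) // genmxE //.
Qed.

Lemma x_sub_Pi i k : (0 < i <= k)%N -> (x i <= Pi x k)%MS.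
Proof.
case/andP=> i0 ik; rewrite /Pi (sumsmx_sup (@Ordinal k.+1 i ik)) // genmxE //.
Qed.

Lemma Sigma_mono k : (Sigma x k <= Sigma x k.+1)%MS.
Proof.
apply/sumsmx_subP => i _; rewrite genmxE x_sub_Sigma //.
by rewrite (leq_trans _ (leqnSn k)) // -ltnS.
Qed.

Lemma Pi_mono k : (Pi x k <= Pi x k.+1)%MS.
Proof.
apply/sumsmx_subP => i i0; rewrite genmxE x_sub_Pi // i0 /=.
by rewrite (leq_trans _ (leqnSn k)) // -ltnS.
Qed.

Lemma Pi_Sigma k : (Pi x k <= Sigma x k)%MS.
Proof.
apply/sumsmx_subP => i i0; rewrite genmxE x_sub_Sigma // -ltnS //.
Qed.

Lemma PiS k : (Pi x k.+1 == Pi x k + x k.+1)%MS.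
Proof.
apply/andP; split.
  apply/sumsmx_subP => i i0; rewrite genmxE.
  have := ltn_ord i; rewrite ltnS leq_eqVlt => /orP[/eqP->|ik].
    exact: addsmxSr.
  by apply: submx_trans (addsmxSl _ _); rewrite x_sub_Pi // i0.
by rewrite addsmx_sub Pi_mono x_sub_Pi //= ltnS leqnn.
Qed.

Lemma Pi0 : \rank (Pi x 0) = 0%N.
Proof.
apply/eqP; rewrite mxrank_eq0 -submx0; apply/sumsmx_subP => i.
by have := ltn_ord i; rewrite ltnS leqn0 => /eqP->.
Qed.

Lemma rank_Sigma2 : (\rank (Sigma x 2) <= 3)%N.
Proof.
have h : (Sigma x 2 <= (x 0 + x 1) + x 2)%MS.
  apply/sumsmx_subP => i _; rewrite genmxE.
  case: i => [[|[|[|i]]] //= _].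
  - by apply: submx_trans (addsmxSl _ _); apply: addsmxSl.
  - by apply: submx_trans (addsmxSl _ _); apply: addsmxSr.
  - exact: addsmxSr.
apply: leq_trans (mxrankS h) _.
have h1 := mxrank_adds_leqif (x 0 + x 1)%MS (x 2).
have h2 := mxrank_adds_leqif (x 0) (x 1).
have r0 := rank_leq_row (x 0); have r1 := rank_leq_row (x 1).
have r2 := rank_leq_row (x 2).
case: h1 => h1 _; case: h2 => h2 _.
apply: leq_trans h1 _; rewrite -[3%N]/(2 + 1)%N leq_add //.
by apply: leq_trans h2 _; rewrite -[2%N]/(1 + 1)%N leq_add.
Qed.
End SP.

From mathcomp Require Import ring.
Section Main.
Variables (K : fieldType) (n m : nat) (x y : nat -> 'rV[K]_n.+1)
  (ell : 'I_m -> 'M[K]_n.+1).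
Hypothesis hn : (2 <= n)%N.
Hypothesis hX : row_free (\matrix_(i < n.+1) x i).
Hypothesis hy : forall i : nat, (3 <= i <= n)%N ->
     [/\ y i != 0, (y i <= x i.-1 + x i)%MS,
         ~~ (y i <= x i.-1)%MS & ~~ (y i <= x i)%MS].
Hypothesis hell : forall i : 'I_m, [/\ \rank (ell i) = 2%N, (ell i <= Sigma x 2)%MS,
       \rank (ell i :&: Pi x 2)%MS = 1%N
     & ~~ ((ell i :&: Pi x 2) == x 2%N)%MS].
Hypothesis hdist : forall i i' : 'I_m, i != i' ->
     ~~ ((ell i :&: Pi x 2) == (ell i' :&: Pi x 2))%MS.

Lemma yex i : exists ab : K * K, (3 <= i <= n)%N ==>
  [&& ab.1 != 0, ab.2 != 0 & y i == ab.1 *: x i.-1 + ab.2 *: x i].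
Proof.
case: (boolP (3 <= i <= n)%N) => hi; last by exists (0, 0).
have [_ s n1 n2] := hy hi.
have [a [b e]] := sub_adds_rV s.
exists (a, b) => /=; rewrite e eqxx !andbT.
apply/andP; split.
  apply: contra n2 => /eqP a0; rewrite e a0 scale0r add0r.
  by apply: scalemx_sub.
apply: contra n1 => /eqP b0; rewrite e b0 scale0r addr0.
by apply: scalemx_sub.
Qed.

Definition ya i := (xchoose (yex i)).1.
Definition yb i := (xchoose (yex i)).2.
Definition t i := yb i / ya i.

Lemma yfacts i : (3 <= i <= n)%N ->
  [/\ ya i != 0, yb i != 0 & y i = ya i *: x i.-1 + yb i *: x i].
Proof.
move=> hi; have := xchooseP (yex i) => /implyP /(_ hi) /and3P[h1 h2 /eqP h3].
by split.
Qed.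

Lemma t_nz i : (3 <= i <= n)%N -> t i != 0.
Proof. by case/yfacts => h1 h2 _; rewrite /t mulf_neq0 ?invr_eq0. Qed.

Lemma Pi2_sub : (Pi x 2 <= x 1 + x 2)%MS.
Proof.
apply/sumsmx_subP => i; rewrite genmxE.
case: i => [[|[|[|i]]] //= _ _]; [exact: addsmxSl | exact: addsmxSr].
Qed.

Lemma nz_row p N (A : 'M[K]_(p, N)) : A != 0 -> exists r, row r A != 0.
Proof.
move=> Anz; case: (pickP (fun r => row r A != 0)) => [r hr | none].
  by exists r.
case/eqP: Anz; apply/row_matrixP => r; rewrite row0.
by apply/eqP; have := none r => /negbFE.
Qed.

Lemma cex (a : 'I_m) : exists c : K, ((x 1 + c *: x 2)%R <= ell a :&: Pi x 2)%MS.
Proof.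
have [_ _ r1 ne2] := hell a.
set p := (ell a :&: Pi x 2)%MS in r1 ne2 *.
have pnz : p != 0 by rewrite -mxrank_eq0 r1.
have [r wnz] := nz_row pnz; set w := row r p in wnz.
have wp : (w <= p)%MS by apply: row_sub.
have wPi : (w <= x 1 + x 2)%MS.
  by apply: submx_trans Pi2_sub; apply: submx_trans wp (capmxSr _ _).
have [al [be e]] := sub_adds_rV wPi.
have weq : (w == p)%MS by apply: rV_eq1.
have al0 : al != 0.
  apply: contraNneq ne2 => a0.
  have wx2 : (w <= x 2)%MS by rewrite e a0 scale0r add0r scalemx_sub.
  have px2 : (p <= x 2)%MS by apply: submx_trans wx2; move/eqmxP: weq => ->.
  have := mxrank_leqif_eq px2; rewrite r1 rank_rV xnz //; first by case=> _ <-.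
exists (be / al).
have -> : x 1 + (be / al) *: x 2 = al^-1 *: w.
  by rewrite e scalerDr !scalerA mulVf // scale1r mulrC.
exact: scalemx_sub.
Qed.

Definition c a := xchoose (cex a).
Lemma c_spec a : ((x 1 + c a *: x 2)%R <= ell a :&: Pi x 2)%MS.
Proof. exact: xchooseP (cex a). Qed.

Fixpoint tau (k : nat) : K := if k is k'.+1 then - tau k' * t k'.+3 else -1.

Definition del (J : seq 'I_m) : K :=
  match rev J with
  | [:: a] => c a
  | a :: b :: _ => tau (size J).-1 * (c b - c a)
  | [::] => 0
  end.

Definition DJ (J : seq 'I_m) : 'rV[K]_n.+1 :=
  x 1 + \sum_(l < size J) del (take l.+1 J) *: x l.+2.

Lemma lineJ1 a : lineJ x y ell [:: a] = ell a.
Proof. by []. Qed.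

Lemma ellJ_S f J : ellJ_fuel x y ell f.+1 J = match rev J with
    | [:: a] => ell a
    | a :: b :: r =>
        ((x (size J).+1 + ellJ_fuel x y ell f (rev (b :: r)))
         :&: (y (size J).+1 + ellJ_fuel x y ell f (rev (a :: r))))%MS
    | [::] => 0
    end.
Proof. by []. Qed.

Lemma lineJ2 R b a : lineJ x y ell (rcons (rcons R b) a) =
  ((x (size R).+3 + lineJ x y ell (rcons R b)) :&:
   (y (size R).+3 + lineJ x y ell (rcons R a)))%MS.
Proof.
by rewrite /lineJ !size_rcons ellJ_S !rev_rcons !rev_cons !revK !size_rcons.
Qed.

Lemma DJ_rcons J a : DJ (rcons J a) = DJ J + del (rcons J a) *: x (size J).+2.
Proof.
rewrite /DJ size_rcons big_ord_recr /= -addrA; congr (_ + (_ + _)).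
  apply: eq_bigr => l _ /=; rewrite -cats1 takel_cat //.
by rewrite take_oversize // size_rcons.
Qed.

Lemma del_rec R b a : del (rcons (rcons R b) a) =
  (del (rcons R b) - del (rcons R a)) * t (size R).+3.
Proof.
rewrite /del !rev_rcons !size_rcons /=.
case/lastP: R => [|R r] /=.
  ring.
rewrite !rev_rcons !size_rcons /=; ring.
Qed.

Lemma cfxx i : (i <= n)%N -> cf x i (x i) = 1.
Proof. by move=> hi; rewrite (cfx hX hi hi) eqxx. Qed.
Lemma cfxy i l : (i <= n)%N -> (l <= n)%N -> i != l -> cf x i (x l) = 0.
Proof. by move=> hi hl ne; rewrite (cfx hX hi hl) (negbTE ne). Qed.

Lemma x_notin_Sigma k : (k.+1 <= n)%N -> ~~ (x k.+1 <= Sigma x k)%MS.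
Proof.
move=> hk; apply/negP => /(SigmaP hX _ (ltnW hk)) /(_ k.+1).
by rewrite ltnSn hk cfxx // => /(_ isT) /eqP; rewrite oner_eq0.
Qed.

Lemma x_notin_Pi k : (k.+1 <= n)%N -> ~~ (x k.+1 <= Pi x k)%MS.
Proof.
move=> hk; apply/negP => /(PiP hX _ (ltnW hk)) [_ /(_ k.+1)].
by rewrite ltnSn hk cfxx // => /(_ isT) /eqP; rewrite oner_eq0.
Qed.

Lemma rank_Pi k : (k <= n)%N -> \rank (Pi x k) = k.
Proof.
elim: k => [|k IH] hk; first exact: Pi0.
rewrite (eqmx_rank (PiS x k)) rank_add_rV ?IH ?x_notin_Pi //.
exact: ltnW.
Qed.

Lemma PiSig k (v : 'rV[K]_n.+1) : (k.+1 <= n)%N -> (v <= Pi x k.+1)%MS -> (v <= Sigma x k)%MS ->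
  (v <= Pi x k)%MS.
Proof.
move=> hk /(PiP hX _ hk) [h0 h1] /(SigmaP hX _ (ltnW hk)) h2.
by apply/(PiP hX _ (ltnW hk)); split.
Qed.

Lemma PiSigM p k (A : 'M_(p, n.+1)) : (k.+1 <= n)%N -> (A <= Pi x k.+1)%MS ->
  (A <= Sigma x k)%MS -> (A <= Pi x k)%MS.
Proof.
move=> hk h1 h2; apply/row_subP => i; apply: (PiSig hk).
  exact: submx_trans (row_sub _ _) h1.
exact: submx_trans (row_sub _ _) h2.
Qed.

Lemma DJ_Pi J : (size J < n)%N -> (DJ J <= Pi x (size J).+1)%MS.
Proof.
move=> hJ; rewrite /DJ addmx_sub ?x_sub_Pi //; apply: summx_sub => l _.
by rewrite scalemx_sub // x_sub_Pi //= ltnS.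
Qed.

Lemma cf1_DJ J : (size J < n)%N -> cf x 1 (DJ J) = 1.
Proof.
move=> hJ; rewrite /DJ (cfD x) (cf_sum x) big1 ?addr0 ?cfxx //.
  exact: ltnW (leq_trans hn _).
move=> l _; rewrite (cfZ x) cfxy ?mulr0 //.
  exact: ltnW (leq_trans hn _).
by rewrite (leq_trans _ hJ) // ltnS.
Qed.

Lemma DJ_nz J : (size J < n)%N -> DJ J != 0.
Proof.
move=> hJ; apply/eqP => e; have := cf1_DJ hJ; rewrite e (cf0 x).
by move/eqP; rewrite eq_sym oner_eq0.
Qed.

Definition Inv (J : seq 'I_m) : Prop :=
  [/\ \rank (lineJ x y ell J) = 2%N, (lineJ x y ell J <= Sigma x (size J).+1)%MS,
      (DJ J <= lineJ x y ell J)%MS, ~~ (lineJ x y ell J <= Pi x (size J).+1)%MS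
    & ~~ (x (size J).+1 <= lineJ x y ell J)%MS].

Lemma Inv1 a : Inv [:: a].
Proof.
have [r2 sS r1 ne] := hell a.
rewrite /Inv lineJ1 /=; split => //.
- rewrite /DJ big_ord1 /=.
  by apply: submx_trans (c_spec a) (capmxSl _ _).
- by apply/negP => /capmx_idPl h; move: r1; rewrite h r2.
- apply/negP => h.
  have h2 : (x 2 <= ell a :&: Pi x 2)%MS.
    by rewrite sub_capmx; apply/andP; split; [exact: h | exact: x_sub_Pi].
  have := @rV_eq1 K _ _ (x 2) _ (xnz hX hn) h2 r1.
  by case/andP=> h3 h4; move: ne; rewrite h3 h4.
Qed.

Lemma Inv_step (R : seq 'I_m) b a :
  ((size R).+3 <= n)%N -> Inv (rcons R b) -> Inv (rcons R a) ->
  (exists Q : 'M[K]_n.+1, [/\ (lineJ x y ell (rcons R b) <= Q)%MS,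
      (lineJ x y ell (rcons R a) <= Q)%MS, (x (size R).+2 <= Q)%MS
    & (\rank Q <= 3)%N]) ->
  Inv (rcons (rcons R b) a).
Proof.
move=> hR [r1 S1s D1 P1 X1] [r2 S2s D2 P2 X2] [Q [L1Q L2Q xQ rQ]].
rewrite !size_rcons in S1s D1 P1 X1 S2s D2 P2 X2 *.
set L1 := lineJ x y ell (rcons R b) in r1 S1s D1 P1 X1 L1Q *.
set L2 := lineJ x y ell (rcons R a) in r2 S2s D2 P2 X2 L2Q *.
set r := size R in hR S1s P1 X1 S2s P2 X2 xQ *.
have hr3 : (3 <= r.+3 <= n)%N by rewrite hR.
have [ya0 yb0 yeq] := yfacts hr3; rewrite /= in yeq.
set xk1 := x r.+2 in X1 X2 xQ yeq *.
set xk2 := x r.+3 in yeq *.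
set yy := y r.+3 in yeq *.
have hr2 : (r.+2 <= n)%N by exact: ltnW.
have F1 : ~~ (xk2 <= Sigma x r.+2)%MS by apply: x_notin_Sigma.
have cfyy : cf x r.+3 yy = yb r.+3.
  rewrite yeq (cfD x) !(cfZ x) cfxx // cfxy //; last by rewrite eqn_leq ltnn.
  by rewrite mulr0 add0r mulr1.
have F2 : ~~ (yy <= Sigma x r.+2)%MS.
  apply/negP => /(SigmaP hX _ hr2) /(_ r.+3); rewrite ltnSn hR cfyy.
  by move=> /(_ isT) /eqP; rewrite (negbTE yb0).
set M := (L1 + xk1)%MS.
have rM : \rank M = 3%N by rewrite rank_add_rV // r1.
have MS : (M <= Sigma x r.+2)%MS by rewrite addsmx_sub S1s x_sub_Sigma.
have L2M : (L2 <= M)%MS.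
  apply: eq_rank_sub L2Q; first by rewrite addsmx_sub L1Q xQ.
  by rewrite rM.
set S1 := (xk2 + L1)%MS.
set S2 := (yy + L2)%MS.
have rS1 : \rank S1 = 3%N.
  rewrite rank_add_rV' ?r1 //; apply: contra F1 => h.
  exact: submx_trans h S1s.
have rS2 : \rank S2 = 3%N.
  rewrite rank_add_rV' ?r2 //; apply: contra F2 => h.
  exact: submx_trans h S2s.
set N := (M + xk2)%MS.
have rN : \rank N = 4%N.
  rewrite rank_add_rV ?rM //; apply: contra F1 => h.
  exact: submx_trans h MS.
have MN : (M <= N)%MS by apply: addsmxSl.
have SN : (S1 + S2 <= N)%MS.
  rewrite !addsmx_sub addsmxSr (submx_trans (addsmxSl L1 xk1) MN).
  rewrite (submx_trans L2M MN) andbT /=.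
  rewrite yeq addmx_sub // scalemx_sub //; last exact: addsmxSr.
  exact: submx_trans (addsmxSr L1 xk1) MN.
have NS : (N <= S1 + S2)%MS.
  have S1S : (S1 <= S1 + S2)%MS by apply: addsmxSl.
  have S2S : (S2 <= S1 + S2)%MS by apply: addsmxSr.
  have xk2S : (xk2 <= S1 + S2)%MS by apply: submx_trans (addsmxSl _ _) S1S.
  rewrite !addsmx_sub xk2S (submx_trans (addsmxSr xk2 L1) S1S) andbT /=.
  have -> : xk1 = (ya r.+3)^-1 *: yy + (- ((ya r.+3)^-1 * yb r.+3)) *: xk2.
    rewrite yeq scalerDr !scalerA mulVf // scale1r scaleNr addrK //.
  rewrite addmx_sub // scalemx_sub //.
  exact: submx_trans (addsmxSl _ _) S2S.
have rSS : \rank (S1 + S2)%MS = 4%N.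
  apply/eqP; rewrite eqn_leq -{1}rN mxrankS //= -{1}rN mxrankS //.
have rL : \rank (S1 :&: S2)%MS = 2%N.
  have := mxrank_sum_cap S1 S2; rewrite rSS rS1 rS2 => h.
  by apply/eqP; rewrite -(eqn_add2l 4) h.
have LS1 : (S1 :&: S2 <= S1)%MS by apply: capmxSl.
have LS2 : (S1 :&: S2 <= S2)%MS by apply: capmxSr.
have Xe : ~~ (xk2 <= S1 :&: S2)%MS.
  apply/negP => hx; have := submx_trans hx LS2.
  case/sub_adds_rVM => al [B [eB BL2]].
  have eB' : B = xk2 - al *: yy by rewrite eB addrAC subrr add0r.
  have BS : (B <= Sigma x r.+2)%MS by apply: submx_trans BL2 S2s.
  have := (SigmaP hX _ hr2).1 BS r.+3; rewrite ltnSn hR => /(_ isT).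
  rewrite eB' (cfB x) (cfZ x) cfyy cfxx // => /eqP; rewrite subr_eq0 => /eqP hab.
  have B2 : B = (- (al * ya r.+3)) *: xk1.
    rewrite eB' yeq scalerDr !scalerA -hab scale1r opprD addrCA subrr addr0.
    by rewrite scaleNr.
  have al0 : al * ya r.+3 != 0.
    rewrite mulf_neq0 //; apply/eqP => a0; move: hab; rewrite a0 mul0r.
    by move/eqP; rewrite oner_eq0.
  move: X2; rewrite /=; apply/negP/negPn.
  have -> : xk1 = (- (al * ya r.+3))^-1 *: B.
    by rewrite B2 scalerA mulVf ?scale1r // oppr_eq0.
  exact: scalemx_sub.
rewrite /Inv lineJ2 !size_rcons -/r -/L1 -/L2 -/S1 -/S2 -/xk2; split => //.
- rewrite (submx_trans LS1) // addsmx_sub x_sub_Sigma //.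
  exact: submx_trans S1s (Sigma_mono _ _).
- rewrite DJ_rcons !size_rcons sub_capmx; apply/andP; split.
    rewrite addmx_sub // ?scalemx_sub //; last exact: addsmxSl.
    exact: submx_trans D1 (addsmxSr _ _).
  rewrite DJ_rcons in D1 *; rewrite DJ_rcons in D2.
  set d1 := del (rcons R b) in D1 *; set d2 := del (rcons R a) in D2 *.
  rewrite del_rec -/d1 -/d2 -/r.
  set s := (d1 - d2) / ya r.+3.
  have -> : DJ R + d1 *: xk1 + (d1 - d2) * t r.+3 *: xk2 =
            DJ R + d2 *: xk1 + s *: yy.
    have hs1 : s * ya r.+3 = d1 - d2 by rewrite /s mulfVK.
    have hs2 : s * yb r.+3 = (d1 - d2) * t r.+3.
      by rewrite /s /t mulrAC mulrA.
    rewrite yeq scalerDr !scalerA hs1 hs2 [RHS]addrA.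
    by rewrite -[DJ R + d2 *: xk1 + _]addrA -scalerDl [d2 + _]addrC subrK.
  rewrite addmx_sub // ?scalemx_sub //; last exact: addsmxSl.
  exact: submx_trans D2 (addsmxSr _ _).
- apply/negP => hP.
  have hLx : (S1 :&: S2 + xk2 <= S1)%MS by rewrite addsmx_sub LS1 addsmxSl.
  have S1L : (S1 <= S1 :&: S2 + xk2)%MS.
    apply: (eq_rank_sub hLx _ (submx_refl S1)).
    by rewrite (rank_add_rV Xe) rL rS1.
  have L1P : (L1 <= Pi x r.+3)%MS.
    apply: submx_trans (addsmxSr xk2 L1) _; apply: submx_trans S1L _.
    rewrite addsmx_sub; apply/andP; split; first exact: hP.
    by rewrite /xk2 x_sub_Pi //= leqnn.
  by move: P1; rewrite (PiSigM hR L1P S1s).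
Qed.

Lemma Inv_all N : forall J : seq 'I_m, uniq J -> (0 < size J)%N ->
  (size J < n)%N -> (size J <= N)%N -> Inv J.
Proof.
elim: N => [|N IH] J uJ s0 sn sN; first by move: s0; rewrite lt0n -leqn0 sN.
case/lastP: J uJ s0 sn sN => [//|J1 a] uJ _ sn sN.
case/lastP: J1 uJ sn sN => [|R b] uJ sn sN; first exact: Inv1.
move: uJ; rewrite rcons_uniq => /andP[aJ1 uJ1].
have uJ2 : uniq (rcons R a).
  move: aJ1 uJ1; rewrite !rcons_uniq mem_rcons inE negb_or => /andP[_ ->].
  by case/andP=> _ ->.
rewrite !size_rcons in sn sN.
have hR : ((size R).+3 <= n)%N by [].
have s1 : (0 < size (rcons R b))%N by rewrite size_rcons.
have a1 : (size (rcons R b) < n)%N by rewrite size_rcons ltnW.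
have a2 : (size (rcons R b) <= N)%N by rewrite size_rcons.
have IH1 := IH _ uJ1 s1 a1 a2.
rewrite !size_rcons in a1 a2 s1.
have IH2 := IH (rcons R a) uJ2.
rewrite !size_rcons in IH2; have {IH2} IH2 := IH2 isT a1 a2.
apply: Inv_step => //.
clear aJ1 IH1 IH2.
case/lastP: R uJ1 uJ2 hR sn sN a1 a2 s1 => [|R' r] uJ1 uJ2 hR sn sN a1 a2 s1.
  exists (Sigma x 2); split => //.
  - by rewrite lineJ1; case: (hell b).
  - by rewrite lineJ1; case: (hell a).
  - exact: x_sub_Sigma.
  - exact: rank_Sigma2.
exists (x (size R').+3 + lineJ x y ell (rcons R' r))%MS; split.
- by rewrite lineJ2 capmxSl.
- by rewrite lineJ2 capmxSl.
- by rewrite size_rcons addsmxSl.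
have uR : uniq (rcons R' r) by move: uJ1; rewrite rcons_uniq => /andP[].
have [rR _ _ _ _] : Inv (rcons R' r).
  apply: IH => //; rewrite ?size_rcons //; move: sn sN; rewrite !size_rcons; lia.
have [h _] := mxrank_adds_leqif (x (size R').+3) (lineJ x y ell (rcons R' r)).
apply: leq_trans h _; rewrite rR -[3%N]/(1 + 2)%N leq_add2r.
exact: rank_leq_row.
Qed.

Lemma final J : uniq J -> (0 < size J)%N -> (size J < n)%N ->
  \rank (lineJ x y ell J :&: Pi x (size J).+1)%MS = 1%N /\
  (DJ J == lineJ x y ell J :&: Pi x (size J).+1)%MS.
Proof.
move=> uJ s0 sn.
have [r2 _ D nP _] := Inv_all uJ s0 sn (leqnn _).
have DL : (DJ J <= lineJ x y ell J :&: Pi x (size J).+1)%MS.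
  by rewrite sub_capmx D DJ_Pi.
have r1 : \rank (lineJ x y ell J :&: Pi x (size J).+1)%MS = 1%N.
  apply/eqP; rewrite eqn_leq; apply/andP; split.
    rewrite leqNgt; apply/negP => h.
    have e2 : \rank (lineJ x y ell J :&: Pi x (size J).+1)%MS = 2%N.
      apply/eqP; rewrite eqn_leq h andbT -[X in (_ <= X)%N]r2 mxrankS ?capmxSl //.
    have := mxrank_leqif_sup (capmxSl (lineJ x y ell J) (Pi x (size J).+1)).
    rewrite e2 r2 => -[_ /esym hs].
    by move: nP; rewrite (submx_trans hs (capmxSr _ _)).
  by rewrite lt0n mxrank_eq0; apply: contraNneq (DJ_nz sn) => h; move: DL; rewrite h submx0.
by split => //; apply: rV_eq1 => //; apply: DJ_nz.
Qed.

Lemma c_inj : injective c.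
Proof.
move=> i i' e; apply/eqP; apply: contraT => ne.
have := hdist ne; set D := (x 1 + c i *: x 2)%R.
have Dnz : D != 0.
  have h1n : (1 <= n)%N by exact: ltnW.
  apply/eqP => h; have := congr1 (cf x 1) h.
  rewrite (cf0 x) (cfD x) (cfZ x) cfxx // cfxy // mulr0 addr0.
  by move/eqP; rewrite oner_eq0.
have [_ _ r1 _] := hell i; have [_ _ r1' _] := hell i'.
have h1 := rV_eq1 Dnz (c_spec i) r1.
have h2 : (D == ell i' :&: Pi x 2)%MS by rewrite /D e; apply: rV_eq1 (c_spec i') r1'; rewrite -e.
move/andP: h1 => [a1 a2]; move/andP: h2 => [b1 b2].
by rewrite (submx_trans a2 b1) (submx_trans b2 a1).
Qed.

Lemma del_take j0 J l : (l < size J)%N ->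
  del (take l.+1 J) = tau l * ((if l is l'.+1 then c (nth j0 J l') else 0) - c (nth j0 J l)).
Proof.
move=> hl; rewrite (take_nth j0 hl).
case: l hl => [|l] hl.
  by rewrite take0 /del /=; ring.
rewrite (take_nth j0 (ltnW hl)) /del !rev_rcons !size_rcons size_take.
by rewrite (ltnW hl).
Qed.

Definition eg j (i : 'I_j) : 'rV[K]_n.+1 :=
  - (tau i) *: x i.+2 + (if (i.+1 < j)%N then tau i.+1 *: x i.+3 else 0).

Lemma DJ_grid j0 J :
  DJ J = \sum_(i < size J) c (nth j0 J i) *: eg i + x 1.
Proof.
set k := size J; set g := fun l => c (nth j0 J l).
have E1 : \sum_(l < k) del (take l.+1 J) *: x l.+2 =
   \sum_(l < k) (tau l * (if (l : nat) is l'.+1 then g l' else 0)) *: x l.+2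
 - \sum_(l < k) (tau l * g l) *: x l.+2.
  rewrite -sumrB; apply: eq_bigr => l _; rewrite (del_take j0) //.
  by rewrite mulrBr scalerBl.
have E2 : \sum_(i < k) g i *: eg i =
   \sum_(i < k) (if (i.+1 < k)%N then (g i * tau i.+1) *: x i.+3 else 0)
 - \sum_(i < k) (tau i * g i) *: x i.+2.
  rewrite -sumrB; apply: eq_bigr => i _; rewrite /eg scalerDr scalerA mulrN.
  rewrite scaleNr addrC; case: ifP => _; rewrite ?scalerA ?scaler0.
    by rewrite (mulrC (g i) (tau i.+1)) (mulrC (g i) (tau i)).
  by rewrite (mulrC (g i) (tau i)).
have E3 : \sum_(l < k) (tau l * (if (l : nat) is l'.+1 then g l' else 0)) *: x l.+2 =
   \sum_(i < k) (if (i.+1 < k)%N then (g i * tau i.+1) *: x i.+3 else 0).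
  clear E1 E2; case: k => [|k]; first by rewrite !big_ord0.
  rewrite big_ord_recl big_ord_recr /= mulr0 scale0r add0r ltnn addr0.
  apply: eq_bigr => i _ /=; rewrite ltnS ltn_ord mulrC.
  by [].
rewrite /DJ E1 E2 E3 addrC.
by [].
Qed.

Lemma tau_nz l : (l.+2 <= n)%N -> tau l != 0.
Proof.
elim: l => [|l IH] hl /=; first by rewrite oppr_eq0 oner_eq0.
rewrite mulf_neq0 ?oppr_eq0 ?IH ?t_nz //; first exact: ltnW.
Qed.

Definition Mg j := col_mx (\matrix_(i < j) @eg j i) (x 1).

Lemma Mg_sub j : (j.+1 <= n)%N -> (Mg j <= Pi x j.+1)%MS.
Proof.
move=> hj; rewrite col_mx_sub x_sub_Pi // andbT.
apply/row_subP => i; rewrite rowK /eg addmx_sub ?scalemx_sub ?x_sub_Pi //=.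
  exact: ltn_ord.
case: ifP => h; last exact: sub0mx.
by rewrite scalemx_sub // x_sub_Pi //= ltnS.
Qed.

Lemma Pi_sub_Mg j : (j.+1 <= n)%N -> (Pi x j.+1 <= Mg j)%MS.
Proof.
move=> hj.
have Erow : forall l (hl : (l < j)%N), (@eg j (Ordinal hl) <= Mg j)%MS.
  move=> l hl; rewrite /Mg -addsmxE; apply: submx_trans (addsmxSl _ _).
  by rewrite -(rowK (fun i => @eg j i)) row_sub.
have down : forall d l, (l.+1 + d = j)%N -> (x l.+2 <= Mg j)%MS.
  elim=> [|d IH] l hld.
    have hl : (l < j)%N by rewrite -hld addn0.
    have := Erow l hl; rewrite /eg /= -hld addn0 ltnn addr0.
    have tz : tau l != 0 by apply: tau_nz; rewrite (leq_trans _ hj) // -hld addn0.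
    have tz' : - tau l != 0 by rewrite oppr_eq0.
    move=> h; rewrite -[x l.+2]scale1r -(mulVf tz') -scalerA.
    by rewrite scalemx_sub.
  have hl : (l < j)%N by rewrite -hld; rewrite ltnS leq_addr.
  have hl1 : (l.+1 < j)%N by rewrite -hld addnS ltnS leq_addr.
  have X3 : (x l.+3 <= Mg j)%MS by apply: (IH l.+1); rewrite -hld addnS.
  have := Erow l hl; rewrite /eg /= hl1.
  have tz : - tau l != 0 by rewrite oppr_eq0; apply: tau_nz; rewrite (leq_trans _ hj).
  move=> h.
  have -> : x l.+2 = (- tau l)^-1 *: ((- tau l *: x l.+2 + tau l.+1 *: x l.+3)
                     + (- tau l.+1) *: x l.+3).
    by rewrite (scaleNr (tau l.+1)) addrK scalerA mulVf ?scale1r.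
  by rewrite scalemx_sub // addmx_sub // scalemx_sub.
apply/sumsmx_subP => i i0; rewrite genmxE.
case: i i0 => [[|[|l]] //= hi _].
  by rewrite /Mg -addsmxE addsmxSr.
by apply: (down (j - l.+1)%N l); rewrite subnKC.
Qed.

Lemma Mg_comb j (u : 'rV[K]_j) (v : K) :
  row_mx u v%:M *m Mg j = \sum_(i < j) u 0 i *: @eg j i + v *: x 1.
Proof.
rewrite /Mg mul_row_col mul_scalar_mx mulmx_sum_row; congr (_ + _).
by apply: eq_bigr => i _; rewrite rowK.
Qed.

Lemma Mg_free j : (j.+1 <= n)%N -> row_free (Mg j).
Proof.
move=> hj; rewrite /row_free eqn_leq rank_leq_row /=.
apply: leq_trans (mxrankS (Pi_sub_Mg hj)).
by rewrite rank_Pi // addn1.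
Qed.
End Main.

Unset Implicit Arguments.
Theorem theorem2p3 (K : fieldType) (n m : nat) (x y : nat -> 'rV[K]_n.+1)
  (ell : 'I_m -> 'M[K]_n.+1) :
  (2 <= n)%N ->
  (* x_0, ..., x_n in general position (a basis of K^(n+1)) *)
  row_free (\matrix_(i < n.+1) x i) ->
  (* y_i (3 <= i <= n) is a point on x_{i-1} (+) x_i, distinct from x_{i-1}, x_i *)
  (forall i : nat, (3 <= i <= n)%N ->
     [/\ y i != 0, (y i <= x i.-1 + x i)%MS,
         ~~ (y i <= x i.-1)%MS & ~~ (y i <= x i)%MS]) ->
  (* L = {ell_0, ..., ell_(m-1)}: lines of Sigma_2 meeting pi_2 in a point,
     different from x_2, these points being pairwise distinct *)
  (forall i : 'I_m, [/\ \rank (ell i) = 2%N, (ell i <= Sigma x 2)%MS,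
       \rank (ell i :&: Pi x 2)%MS = 1%N
     & ~~ ((ell i :&: Pi x 2) == x 2%N)%MS]) ->
  (forall i i' : 'I_m, i != i' ->
     ~~ ((ell i :&: Pi x 2) == (ell i' :&: Pi x 2))%MS) ->
  forall j : nat, (1 <= j <= n.-1)%N ->
  [/\
   (* each ell_J, |J| = j, is a line of Sigma_{j+1} meeting pi_{j+1} in a point *)
   (forall J : seq 'I_m, uniq J -> size J = j ->
      [/\ \rank (lineJ x y ell J) = 2%N, (lineJ x y ell J <= Sigma x j.+1)%MS
        & \rank (lineJ x y ell J :&: Pi x j.+1)%MS = 1%N]),
   (* the directions are pairwise distinct *)
   (forall J J' : seq 'I_m, uniq J -> uniq J' -> size J = j -> size J' = j ->
      J != J' ->
      ~~ ((lineJ x y ell J :&: Pi x j.+1) == (lineJ x y ell J' :&: Pi x j.+1))%MS)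
   &
   (* and lie in an |L|^j grid of pi_{j+1} *)
   exists (e : 'I_j -> 'rV[K]_n.+1) (e0 : 'rV[K]_n.+1) (A : 'I_j -> seq K),
     [/\ row_free (col_mx (\matrix_(i < j) e i) e0),
         (col_mx (\matrix_(i < j) e i) e0 == Pi x j.+1)%MS,
         (forall i, uniq (A i) /\ size (A i) = m) &
         (forall J : seq 'I_m, uniq J -> size J = j ->
            exists a : 'I_j -> K, (forall i, a i \in A i) /\
              ((lineJ x y ell J :&: Pi x j.+1) ==
                 ((\sum_(i < j) a i *: e i) + e0)%R)%MS)]].
Proof.
move=> hn hX hy hell hdist j /andP[j1 jn].
have hj : (j.+1 <= n)%N by move: hn jn; clear; lia.
have fin := final hn hX hy hell.
have free := Mg_free hX hy hj.
have cinj : injective (c hn hX hell) := c_inj hdist.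
set cc := c hn hX hell in cinj.
split.
- move=> J uJ sJ.
  have s0 : (0 < size J)%N by rewrite sJ.
  have sn : (size J < n)%N by rewrite sJ.
  have [r2 S _ _ _] := Inv_all hn hX hy hell uJ s0 sn (leqnn _).
  have [r1 _] := fin J uJ s0 sn.
  by rewrite -sJ; split.
- move=> J J' uJ uJ' sJ sJ' neJ; apply/negP => heq.
  have s0 : (0 < size J)%N by rewrite sJ.
  have sn : (size J < n)%N by rewrite sJ.
  have s0' : (0 < size J')%N by rewrite sJ'.
  have sn' : (size J' < n)%N by rewrite sJ'.
  have [_ /andP[d1 d2]] := fin J uJ s0 sn.
  have [_ /andP[d1' d2']] := fin J' uJ' s0' sn'.
  rewrite sJ in d1 d2; rewrite sJ' in d1' d2'.
  case/andP: heq => h1 h2.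
  have : (DJ hn hX hy hell J <= DJ hn hX hy hell J')%MS.
    exact: submx_trans d1 (submx_trans h1 d2').
  case/sub_rVP => lam elam.
  clear h1 h2 d1' d2'.
  case: J uJ sJ neJ s0 sn d1 d2 elam => [//|j0 J1] uJ sJ neJ s0 sn d1 d2 elam.
  set J := j0 :: J1 in uJ sJ neJ s0 sn d1 d2 elam.
  rewrite !(DJ_grid hn hX hy hell j0) sJ sJ' in elam.
  set u := \row_(i < j) (cc (nth j0 J i) - lam * cc (nth j0 J' i)).
  have hz : row_mx u (1 - lam)%:M *m Mg hy j = 0.
    rewrite Mg_comb; apply: (@eq_trans _ _ ((\sum_(i < j) cc (nth j0 J i) *: eg hy i + x 1%N)
       - lam *: (\sum_(i < j) cc (nth j0 J' i) *: eg hy i + x 1%N))); last first.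
      by rewrite elam subrr.
    rewrite scalerDr scaler_sumr opprD addrACA -sumrB scalerBl scale1r.
    congr (_ + _); apply: eq_bigr => i _.
    by rewrite mxE scalerBl scalerA.
  move/eqP: hz; rewrite (mulmx_free_eq0 _ free) => /eqP hz.
  have hl : forall i : 'I_j, cc (nth j0 J i) = lam * cc (nth j0 J' i).
    move=> i; have := congr1 (fun M : 'M[K]_(1, j + 1) => M 0 (lshift 1 i)) hz.
    by rewrite row_mxEl mxE mxE => /eqP; rewrite subr_eq0 => /eqP.
  have l1 : lam = 1.
    have := congr1 (fun M : 'M[K]_(1, j + 1) => M 0 (rshift j (0 : 'I_1))) hz.
    rewrite row_mxEr mxE mxE mulr1n => /eqP; rewrite subr_eq0 => /eqP.
    by move->.
  case/negP: neJ; apply/eqP; apply: (eq_from_nth (x0 := j0)); first by rewrite sJ sJ'.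
  move=> i; rewrite sJ => hi.
  by have := hl (Ordinal hi); rewrite l1 mul1r /= => /cinj.
exists (@eg _ _ x y hy j), (x 1), (fun _ => map cc (enum 'I_m)); split.
- exact: free.
- by rewrite Mg_sub // Pi_sub_Mg.
- move=> i; split; last by rewrite size_map size_enum_ord.
  by rewrite map_inj_uniq ?enum_uniq.
move=> J uJ sJ.
have s0 : (0 < size J)%N by rewrite sJ.
have sn : (size J < n)%N by rewrite sJ.
have [_ hd] := fin J uJ s0 sn.
case: J uJ sJ s0 sn hd => [//|j0 J1] uJ sJ s0 sn hd.
exists (fun i : 'I_j => cc (nth j0 (j0 :: J1) i)); split.
  by move=> i; rewrite map_f ?mem_enum.
move: hd; rewrite (DJ_grid hn hX hy hell j0) sJ andbC.
by [].
Qed.
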